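(* For all $n\ge0$, \[ p_n^2=\delta_{n,0}+p_{n-2}^2+p_{n-3}^2+2\sum_{l=5}^n c_{l-5}p_{n-l}^2 . \]
   Context: The Narayana's cows numbers $c_n$ are defined by $c_n=\delta_{n,0}+c_{n-1}+c_{n-3}$ for $n\ge0$, $c_n=0$ for $n<0$. The Padovan numbers $p_n$ are defined by $p_n=\delta_{n,0}+p_{n-2}+p_{n-3}$ for $n\ge0$, $p_n=0$ for $n<0$. $\delta_{i,j}$ is $1$ if $i=j$ and $0$ otherwise. Empty sums are $0$. *)

(* Defs.v *)
From mathcomp Require Import all_boot ssralg ssrint.
Set Implicit Arguments. Unset Strict Implicit. Unset Printing Implicit Defensive.

(* Narayana's cows numbers for nonnegative indices:
   c_n = delta_{n,0} + c_{n-1} + c_{n-3}, with c_n = 0 for n < 0.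
   Unfolding: c_0 = 1, c_1 = c_0 = 1, c_2 = c_1 = 1, c_{n+3} = c_{n+2} + c_n. *)
Fixpoint cows (n : nat) : nat :=
  match n with
  | 0 => 1
  | 1 => 1
  | 2 => 1
  | ((m.+1 as k).+1 as j).+1 => cows j + cows m
  end.

(* Padovan numbers for nonnegative indices:
   p_n = delta_{n,0} + p_{n-2} + p_{n-3}, with p_n = 0 for n < 0.
   Unfolding: p_0 = 1, p_1 = 0, p_2 = p_0 = 1, p_{n+3} = p_{n+1} + p_n. *)
Fixpoint padovan (n : nat) : nat :=
  match n with
  | 0 => 1
  | 1 => 0
  | 2 => 1
  | ((m.+1 as k).+1 as j).+1 => padovan k + padovan m
  end.

Definition cz (n : int) : nat :=
  match n with Posz k => cows k | Negz _ => 0 end.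
Definition pz (n : int) : nat :=
  match n with Posz k => padovan k | Negz _ => 0 end.

(* Main.v *)
Require Import Defs.
From mathcomp Require Import all_boot ssralg ssrint.
From mathcomp Require Import zify.
Import GRing.Theory.

Definition q k := (padovan k ^ 2)%N.
Definition F m := (\sum_(k < m.+1) cows k * q (m - k))%N.

Lemma pS3 m : padovan m.+3 = (padovan m.+1 + padovan m)%N.
Proof. by case: m. Qed.
Lemma cS3 m : cows m.+3 = (cows m.+2 + cows m)%N.
Proof. by case: m. Qed.

Lemma q6 m : (q m.+4.+2 + q m.+2 + q m = q m.+4.+1 + q m.+4 + q m.+3 + q m.+1)%N.
Proof.
rewrite /q !pS3.
move: (padovan m) (padovan m.+1) (padovan m.+2) => a b c.
nia.
Qed.

Lemma F3 m : (F m.+3 = q m.+3 + F m.+2 + F m)%N.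
Proof.
have L : F m.+3 = (q m.+3 + q m.+2 + q m.+1 + \sum_(k < m.+1) cows k.+3 * q (m - k))%N.
  rewrite /F big_ord_recl big_ord_recl big_ord_recl /= !mul1n subn0 !addnA.
  by congr (_ + _)%N; apply: eq_bigr => i _; rewrite !lift0.
have M : F m.+2 = (q m.+2 + q m.+1 + \sum_(k < m.+1) cows k.+2 * q (m - k))%N.
  rewrite /F big_ord_recl big_ord_recl /= !mul1n subn0 !addnA.
  by congr (_ + _)%N; apply: eq_bigr => i _; rewrite !lift0.
rewrite L M /F.
under eq_bigr do rewrite cS3 mulnDl.
rewrite big_split /=.
lia.
Qed.

Lemma P m : (q m.+4.+1 = q m.+3 + q m.+2 + 2 * F m)%N.
Proof.
move: m; apply: ltn_ind => m IH.
case: m IH => [|[|[|m]]] IH; try by rewrite /F /q !big_ord_recl big_ord0.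
have H1 := IH m.+2 ltac:(lia).
have H2 := IH m ltac:(lia).
have := q6 m.+2.
rewrite F3. lia.
Qed.

Theorem mainTheorem13 (n : nat) :
  (pz n%:Z ^ 2 =
   ((n == 0)%N : nat) + pz (n%:Z - 2) ^ 2 + pz (n%:Z - 3) ^ 2
   + 2 * \sum_(5 <= l < n.+1) cz (l%:Z - 5) * pz (n%:Z - l%:Z) ^ 2)%N.
Proof.
case: n => [|[|[|[|[|m]]]]]; try by rewrite big_geq.
have -> : \sum_(5 <= l < m.+4.+2) cz (l%:Z - 5) * pz (m.+4.+1%:Z - l%:Z) ^ 2 = F m.
  rewrite -{1}(add0n 5) big_addn big_mkord /F.
  have -> : (m.+4.+2 - 5 = m.+1)%N by lia.
  apply: eq_bigr => [[i Hi]] _ /=.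
  have -> : ((i + 5)%:Z - 5 = i%:Z)%R by rewrite PoszD addrK.
  have -> : (m.+4.+1%:Z - (i + 5)%:Z = (m - i)%:Z)%R.
    by rewrite subzn; [congr Posz; lia | lia].
  by [].
have -> : (m.+4.+1%:Z - 2 = m.+3%:Z)%R by [].
have -> : (m.+4.+1%:Z - 3 = m.+2%:Z)%R by [].
rewrite /= add0n; exact: P.
Qed.
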